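(* Let $G$ be an outer-string graph with an outer-string representation $\varphi$, and let $\varphi(x_i)$ be an external string. Suppose a cop occupies $x_i$ and the robber occupies a vertex whose string does not intersect $\varphi(x_i)$ and lies to the right of $\varphi(x_i)$. If the cop stays on $x_i$, the robber cannot move to a string on the left of $\varphi(x_i)$ (without being captured).
   Context: An outer-string representation of $G$ assigns to each vertex a bounded curve (string) in the closed upper half-plane meeting the $x$-axis in exactly one point, an endpoint of the string, with distinct vertices adjacent iff their strings intersect. Order the vertices $v_1,\dots,v_n$ by the $x$-coordinate of the point where their string meets the $x$-axis; $v_i$ is on the left of $v_j$ (and $v_j$ on the right of $v_i$) if $i<j$. The strings partition the upper half-plane into regions, exactly one unbounded; a string is external if it has a point on the boundary of the unbounded region. Game of cops and robber: alternate moves, each piece stays or moves to an adjacent vertex; capture when a cop occupies the robber's vertex (a robber moving to a vertex of $N[x_i]$ while a cop is on $x_i$ is captured). *)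

(* Defs.v *)
From HB Require Import structures.
From mathcomp Require Import all_boot all_order all_algebra.
From mathcomp Require Import all_classical all_reals all_analysis.
Set Implicit Arguments. Unset Strict Implicit. Unset Printing Implicit Defensive.
Import Order.TTheory GRing.Theory Num.Theory.
Import numFieldNormedType.Exports.
Local Open Scope classical_set_scope.
Local Open Scope ring_scope.

Section OuterString.
Variable R : realType.
Local Notation pt := (R * R)%type.

Definition upper_half : set pt := [set p | 0 <= p.2].

Definition string_of (gam : R -> pt) : set pt := gam @` [set t : R | 0 <= t <= 1].

(* gam is a string: a curve (continuous on [0,1]) in the closed upper
   half-plane meeting the x-axis in exactly one point, its endpoint gam 0.
   (Boundedness is automatic: continuous image of [0,1].) *)
Definition is_string (gam : R -> pt) : Prop :=
  {within [set t : R | 0 <= t <= 1], continuous gam} /\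
  (gam 0).2 = 0 /\
  (forall t, 0 <= t <= 1 -> 0 <= (gam t).2 /\ ((gam t).2 = 0 -> gam t = gam 0)).

Definition base (V : Type) (phi : V -> R -> pt) (v : V) : pt := phi v 0.

Definition outer_string_rep (V : finType) (e : rel V) (phi : V -> R -> pt) : Prop :=
  (forall v, is_string (phi v)) /\
  (forall u v, u != v -> (e u v <-> string_of (phi u) `&` string_of (phi v) !=set0)).

Definition all_strings (V : finType) (phi : V -> R -> pt) : set pt :=
  \bigcup_(v in [set: V]) string_of (phi v).

Definition region (V : finType) (phi : V -> R -> pt) (C : set pt) : Prop :=
  exists p, (upper_half `\` all_strings phi) p /\
            C = connected_component (upper_half `\` all_strings phi) p.

Definition bounded_pts (A : set pt) : Prop :=
  exists M : R, forall p, A p -> `|p.1| <= M /\ `|p.2| <= M.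

Definition bdry (A : set pt) : set pt := closure A `\` interior A.

Definition external (V : finType) (phi : V -> R -> pt) (x : V) : Prop :=
  exists C, region phi C /\ ~ bounded_pts C /\
            string_of (phi x) `&` bdry C !=set0.

End OuterString.

(* Main.v *)
Require Import Defs.
From HB Require Import structures.
From mathcomp Require Import all_boot all_order all_algebra.
From mathcomp Require Import all_classical all_reals all_analysis.
From mathcomp Require Import ring lra zify.
Import Order.TTheory GRing.Theory Num.Theory.
Import numFieldNormedType.Exports.
Set Implicit Arguments. Unset Strict Implicit. Unset Printing Implicit Defensive.
Local Open Scope classical_set_scope.
Local Open Scope ring_scope.

Definition dq (a b : nat) : int :=
  let k := ((4 + b - a) %% 4)%N in
  if k == 1%N then 1 else if k == 3%N then -1 else 0.
Definition opp4 (a b : nat) : bool := ((4 + b - a) %% 4)%N == 2%N.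
Definition hU (a : nat) : int := a%:Z.
Definition hL (a : nat) : int := if a == 0%N then 0 else if a == 3%N then -1 else -2.

Lemma dq_anti a b : (a < 4)%N -> (b < 4)%N -> dq b a = - dq a b.
Proof.
by case: a => [|[|[|[|a]]]] //; case: b => [|[|[|[|b]]]].
Qed.

Lemma dq_cell a b c d : (a < 4)%N -> (b < 4)%N -> (c < 4)%N -> (d < 4)%N ->
  ~~ opp4 a b -> ~~ opp4 b c -> ~~ opp4 c d -> ~~ opp4 d a -> ~~ opp4 a c -> ~~ opp4 b d ->
  dq a b + dq b c + dq c d + dq d a = 0.
Proof.
by case: a => [|[|[|[|a]]]] //; case: b => [|[|[|[|b]]]] //;
   case: c => [|[|[|[|c]]]] //; case: d => [|[|[|[|d]]]].
Qed.

Lemma dq_hU a b : (a < 4)%N -> (b < 4)%N -> a != 3%N -> b != 3%N -> ~~ opp4 a b ->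
  dq a b = hU b - hU a.
Proof. by case: a => [|[|[|[|a]]]] //; case: b => [|[|[|[|b]]]]. Qed.

Lemma dq_hL a b : (a < 4)%N -> (b < 4)%N -> a != 1%N -> b != 1%N -> ~~ opp4 a b ->
  dq a b = hL b - hL a.
Proof. by case: a => [|[|[|[|a]]]] //; case: b => [|[|[|[|b]]]]. Qed.

Section Q.
Variable R : realFieldType.
Implicit Types v w : R * R.

Definition quad v : nat :=
  if (0 < v.1) && (0 <= v.2) then 0 else if (v.1 <= 0) && (0 < v.2) then 1
  else if (v.1 < 0) && (v.2 <= 0) then 2 else 3.

Lemma quad_lt4 v : (quad v < 4)%N.
Proof. by rewrite /quad; case: ifP => //; case: ifP => //; case: ifP. Qed.

Lemma quad_spec v :
  [\/ quad v = 0%N /\ (0 < v.1 /\ 0 <= v.2), quad v = 1%N /\ (v.1 <= 0 /\ 0 < v.2),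
      quad v = 2%N /\ (v.1 < 0 /\ v.2 <= 0) | quad v = 3%N /\ (0 <= v.1 /\ v.2 <= 0)].
Proof.
rewrite /quad; case: ifP => [/andP[h1 h2]|H1]; first by constructor 1.
case: ifP => [/andP[h1 h2]|H2]; first by constructor 2.
case: ifP => [/andP[h1 h2]|H3]; first by constructor 3.
constructor 4; split => //.
have [x0|x0] := ltP v.1 0.
  have [y0|y0] := leP v.2 0; first by move: H3; rewrite x0 y0.
  by move: H2; rewrite y0 (ltW x0).
split; first by [].
have [y0|y0] := leP v.2 0 => //.
have [x1|x1] := ltP 0 v.1; first by move: H1; rewrite x1 (ltW y0).
by move: H2; rewrite x1 y0.
Qed.

Lemma dot_nopp v w : 0 < v.1 * w.1 + v.2 * w.2 -> ~~ opp4 (quad v) (quad w).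
Proof.
move=> H.
case: (quad_spec v) => -[-> [a1 a2]]; case: (quad_spec w) => -[-> [b1 b2]] //=; nra.
Qed.

Definition bigv v (m : R) := m <= `|v.1| \/ m <= `|v.2|.

Lemma bigv_sq v m : 0 <= m -> bigv v m -> m ^+ 2 <= v.1 ^+ 2 + v.2 ^+ 2.
Proof.
move=> m0 [h|h].
  have : m ^+ 2 <= `|v.1| ^+ 2 by rewrite lerXn2r // ?nnegrE // (le_trans m0 h).
  rewrite (real_normK (num_real v.1)) => h2; have := sqr_ge0 v.2; lra.
have : m ^+ 2 <= `|v.2| ^+ 2 by rewrite lerXn2r // ?nnegrE // (le_trans m0 h).
rewrite (real_normK (num_real v.2)) => h2; have := sqr_ge0 v.1; lra.
Qed.

Lemma lt_sq (x e : R) : `|x| < e -> x ^+ 2 <= e ^+ 2.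
Proof.
move=> h; have e0 : 0 <= e by rewrite (le_trans _ (ltW h)).
by rewrite -(real_normK (num_real x)) lerXn2r // ?nnegrE // ltW.
Qed.

Lemma close_dot m v w : 0 < m -> bigv v m -> bigv w m ->
  `|v.1 - w.1| < m / 2 -> `|v.2 - w.2| < m / 2 -> 0 < v.1 * w.1 + v.2 * w.2.
Proof.
move=> m0 hv hw h1 h2.
have := bigv_sq (ltW m0) hv; have := bigv_sq (ltW m0) hw.
have := lt_sq h1; have := lt_sq h2.
have E : 2 * (v.1 * w.1 + v.2 * w.2) = (v.1 ^+ 2 + v.2 ^+ 2) + (w.1 ^+ 2 + w.2 ^+ 2)
   - ((v.1 - w.1) ^+ 2 + (v.2 - w.2) ^+ 2) by ring.
have E2 : (m / 2) ^+ 2 = m ^+ 2 / 4 by field.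
rewrite E2; have : 0 < m ^+ 2 by rewrite exprn_gt0.
lra.
Qed.

End Q.

Section W.
Variable R : realFieldType.
Implicit Types a b p v w : R * R.

Definition sub (v w : R * R) : R * R := (v.1 - w.1, v.2 - w.2).
Definition close (a b : R * R) (e : R) := `|a.1 - b.1| < e /\ `|a.2 - b.2| < e.
Definition Wsum (f : nat -> R * R) p (m n : nat) : int :=
  \sum_(m <= i < n) dq (quad (sub (f i) p)) (quad (sub (f i.+1) p)).

Lemma close_sym a b e : close a b e -> close b a e.
Proof. by rewrite /close -!(distrC a.1) -!(distrC a.2). Qed.

Lemma close_refl a e : 0 < e -> close a a e.
Proof. by move=> e0; rewrite /close !subrr normr0. Qed.

Lemma nopp_sub a b p p' m : 0 < m -> bigv (sub a p) m -> bigv (sub b p') m ->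
  close a b (m / 4) -> close p p' (m / 4) -> ~~ opp4 (quad (sub a p)) (quad (sub b p')).
Proof.
move=> m0 ha hb [c1 c2] [d1 d2]; apply: dot_nopp; apply: (close_dot m0 ha hb) => /=.
  move: c1 d1; rewrite !ltr_norml => /andP[c1 c1'] /andP[d1 d1']; apply/andP; lra.
move: c2 d2; rewrite !ltr_norml => /andP[e1 e1'] /andP[g1 g1']; apply/andP; lra.
Qed.

Lemma W_const f p p' n m : 0 < m -> f n = f 0%N ->
  (forall i, (i <= n)%N -> bigv (sub (f i) p) m /\ bigv (sub (f i) p') m) ->
  (forall i, (i < n)%N -> close (f i) (f i.+1) (m / 4)) -> close p p' (m / 4) ->
  Wsum f p 0 n = Wsum f p' 0 n.
Proof.
move=> m0 fn hbig hcl hp.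
pose A i := quad (sub (f i) p); pose B i := quad (sub (f i) p').
have m4 : 0 < m / 4 by rewrite divr_gt0.
have H i : (i < n)%N -> dq (A i) (A i.+1) - dq (B i) (B i.+1) =
    - (dq (A i.+1) (B i.+1) - dq (A i) (B i)).
  move=> lin; have [ha hb] := hbig i (ltnW lin); have [ha' hb'] := hbig i.+1 lin.
  have ci := hcl i lin; have ci' := close_sym ci; have hp' := close_sym hp.
  have := @dq_cell (A i) (A i.+1) (B i.+1) (B i) (quad_lt4 _) (quad_lt4 _) (quad_lt4 _) (quad_lt4 _)
    (nopp_sub m0 ha ha' ci (close_refl _ m4))
    (nopp_sub m0 ha' hb' (close_refl _ m4) hp)
    (nopp_sub m0 hb' hb ci' (close_refl _ m4))
    (nopp_sub m0 hb ha (close_refl _ m4) hp')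
    (nopp_sub m0 ha hb' ci hp)
    (nopp_sub m0 ha' hb ci' hp).
  rewrite (@dq_anti (B i) (B i.+1)) ?quad_lt4 // (@dq_anti (A i) (B i)) ?quad_lt4 //.
  move=> E; lia.
apply/eqP; rewrite -subr_eq0 /Wsum -sumrB.
rewrite (eq_big_nat _ _ (F2 := fun i => - (dq (A i.+1) (B i.+1) - dq (A i) (B i)))); last first.
  by move=> i /andP[_ lin]; rewrite -H.
rewrite sumrN telescope_sumr // /A /B fn subrr oppr0 //.
Qed.

Lemma W_teleU f p m n : (m <= n)%N ->
  (forall i, (m <= i <= n)%N -> quad (sub (f i) p) != 3%N) ->
  (forall i, (m <= i < n)%N -> ~~ opp4 (quad (sub (f i) p)) (quad (sub (f i.+1) p))) ->
  Wsum f p m n = hU (quad (sub (f n) p)) - hU (quad (sub (f m) p)).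
Proof.
move=> mn h3 ho; rewrite /Wsum -(telescope_sumr (fun i => hU (quad (sub (f i) p))) mn).
apply: eq_big_nat => i /andP[mi lin]; apply: dq_hU; rewrite ?quad_lt4 ?ho ?mi //.
  by apply: h3; rewrite mi ltnW.
by apply: h3; rewrite (leq_trans mi) // ltnW.
Qed.

Lemma W_teleL f p m n : (m <= n)%N ->
  (forall i, (m <= i <= n)%N -> quad (sub (f i) p) != 1%N) ->
  (forall i, (m <= i < n)%N -> ~~ opp4 (quad (sub (f i) p)) (quad (sub (f i.+1) p))) ->
  Wsum f p m n = hL (quad (sub (f n) p)) - hL (quad (sub (f m) p)).
Proof.
move=> mn h3 ho; rewrite /Wsum -(telescope_sumr (fun i => hL (quad (sub (f i) p))) mn).
apply: eq_big_nat => i /andP[mi lin]; apply: dq_hL; rewrite ?quad_lt4 ?ho ?mi //.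
  by apply: h3; rewrite mi ltnW.
by apply: h3; rewrite (leq_trans mi) // ltnW.
Qed.

Lemma Wsum_split f p m k n : (m <= k <= n)%N -> Wsum f p m n = Wsum f p m k + Wsum f p k n.
Proof. by move=> h; rewrite /Wsum -big_cat_nat //; case/andP: h. Qed.

Lemma quad_negx v : v.1 < 0 -> v.2 = 0 -> quad v = 2%N.
Proof. by move=> x0 y0; rewrite /quad y0 ltxx lexx x0 !andbF /= andbT ltNge (ltW x0). Qed.

Lemma quad_posx v : 0 < v.1 -> v.2 = 0 -> quad v = 0%N.
Proof. by move=> x0 y0; rewrite /quad y0 lexx x0. Qed.

Lemma quad_up v m : 0 < m -> bigv v m -> 0 <= v.2 -> quad v != 3%N.
Proof.
move=> m0 hb y0; apply/negP => /eqP E.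
have := quad_spec v; rewrite E => -[[]|[]|[]|[_ [a1 a2]]] //.
have y : v.2 = 0 by apply/eqP; rewrite eq_le a2 y0.
have [x0|x0] := ltP 0 v.1.
  by move: E; rewrite (quad_posx x0 y).
have x : v.1 = 0 by apply/eqP; rewrite eq_le x0 a1.
by case: hb; rewrite ?x ?y normr0 => h; move: (lt_le_trans m0 h); rewrite ltxx.
Qed.

Lemma quad_down v : v.2 <= 0 -> quad v != 1%N.
Proof. by move=> y0; case: (quad_spec v) => -[-> [a1 a2]] //; move: (lt_le_trans a2 y0); rewrite ltxx. Qed.

Lemma quad_left v : v.1 < 0 -> quad v != 3%N.
Proof. by move=> x0; case: (quad_spec v) => -[-> [a1 a2]] //; move: (lt_le_trans x0 a1); rewrite ltxx. Qed.

Lemma quad_right v : 0 < v.1 -> quad v != 1%N.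
Proof. by move=> x0; case: (quad_spec v) => -[-> [a1 a2]] //; move: (lt_le_trans x0 a1); rewrite ltxx. Qed.

Lemma quad_pos v : 0 < v.2 -> quad v != 3%N.
Proof. by move=> x0; case: (quad_spec v) => -[-> [a1 a2]] //; move: (lt_le_trans x0 a2); rewrite ltxx. Qed.

Lemma quad_neg v : v.2 < 0 -> quad v != 1%N.
Proof. by move=> x0; case: (quad_spec v) => -[-> [a1 a2]] //; move: (lt_trans x0 a2); rewrite ltxx. Qed.

End W.

Section A.
Variable R : realType.
Local Notation pt := (R * R)%type.

Lemma ballR (x y e : R) : ball x e y = (`|x - y| < e).
Proof. by rewrite -ball_normE. Qed.

Lemma ball_closeE (p q : pt) e : ball p e q = close p q e.
Proof. rewrite /close -!ballR; done. Qed.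

Lemma cont_eps (g : R -> pt) (A : set R) x : {within A, continuous g} -> A x ->
  forall e, 0 < e -> exists2 d, 0 < d & forall y, A y -> `|x - y| < d -> close (g x) (g y) e.
Proof.
move=> gc Ax e e0.
have := (subspace_continuousP _ _).1 gc x Ax (ball (g x) e) (nbhsx_ballx _ _ e0).
move=> /nbhs_ballP [d /= d0 H]; exists d => // y Ay xy.
by rewrite -ball_closeE; apply: (H y) => //; rewrite ballR.
Qed.


Definition I01 : set R := [set t : R | 0 <= t <= 1].

Lemma close_tri (a b c : pt) e1 e2 : close a b e1 -> close a c e2 -> close b c (e1 + e2).
Proof.
rewrite /close !ltr_norml => -[/andP[h1 h2] /andP[h3 h4]] [/andP[k1 k2] /andP[k3 k4]].
by split; apply/andP; lra.
Qed.

Lemma unif (g : R -> pt) : {within I01, continuous g} -> forall e, 0 < e ->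
  exists N0, forall N, (N0 <= N)%N -> forall s t, I01 s -> I01 t ->
    `|s - t| <= N%:R^-1 -> close (g s) (g t) e.
Proof.
move=> gc e e0.
have cK : compact I01 by rewrite /I01 -(set_itvcc 0 1); exact: segment_compact.
have /compact_near_coveringP/near_covering_withinP cov := cK.
pose P (n : nat) (x : R) := forall t, I01 t -> `|x - t| <= n%:R^-1 -> close (g x) (g t) e.
have : \forall n \near \oo, I01 `<=` P n.
  apply: (cov nat \oo P) => x Ix.
  have e2 : 0 < e / 2 by rewrite divr_gt0.
  have [d d0 Hd] := cont_eps gc Ix e2.
  have d2 : 0 < d / 2 by rewrite divr_gt0.
  exists (ball x (d / 2), [set n : nat | (d / 2)^-1 < n%:R]); first split => /=.
  - exact: nbhsx_ballx.
  - exact: nbhs_infty_gtr.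
  move=> [x' n] [/= bx hn] Ix' t It xt.
  have n0 : 0 < n%:R :> R by apply: lt_trans hn; rewrite invr_gt0.
  have hn' : n%:R^-1 < d / 2 by rewrite invf_plt ?posrE.
  move: bx; rewrite ballR => bx.
  have xx' : `|x - x'| < d by move: bx; rewrite !ltr_norml => /andP[? ?]; apply/andP; lra.
  have c1 := Hd x' Ix' xx'.
  have xt' : `|x - t| < d.
    move: bx xt; rewrite ltr_norml ler_norml ltr_norml => /andP[? ?] /andP[? ?]; apply/andP; lra.
  have c2 := Hd t It xt'.
  have E : e / 2 + e / 2 = e by field.
  by rewrite -E; apply: close_tri c1 c2.
case=> N _ HN; exists N => n Nn s t Is It st; exact: HN n Nn s Is t It st.
Qed.

Lemma avoid (g : R -> pt) p : {within I01, continuous g} -> ~ string_of g p ->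
  exists2 e, 0 < e & forall t, I01 t -> ~ close (g t) p e.
Proof.
move=> gc np.
have cI : compact I01 by rewrite /I01 -(set_itvcc 0 1); exact: segment_compact.
have cK : compact (string_of g) := continuous_compact gc cI.
have cl : closed (string_of g) := compact_closed (@norm_hausdorff _ _) cK.
have op := closed_openC cl.
have /nbhs_ballP [e /= e0 H] := op p np.
exists e => // t It /close_sym; rewrite -ball_closeE => /H; apply.
by exists t.
Qed.

Lemma str_bounded (g : R -> pt) : {within I01, continuous g} ->
  exists M, forall t, I01 t -> `|(g t).1| <= M /\ `|(g t).2| <= M.
Proof.
move=> gc.
have cI : compact I01 by rewrite /I01 -(set_itvcc 0 1); exact: segment_compact.
have cK : compact (string_of g) := continuous_compact gc cI.
have [M0 [_ HM]] := compact_bounded cK.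
exists (M0 + 1) => t It.
have h1 : M0 < M0 + 1 by rewrite ltrDl.
have gt : string_of g (g t) by exists t.
move: (HM _ h1 (g t) gt).
rewrite /= prod_normE ge_max => /andP[]; done.
Qed.
End A.
Arguments I01 {R}.

Section C.
Variable R : realType.
Local Notation pt := (R * R)%type.

Lemma close_trans (a b c : pt) e1 e2 : close a b e1 -> close b c e2 -> close a c (e1 + e2).
Proof. by move=> /close_sym h1 h2; apply: close_tri h1 h2. Qed.

Lemma open_loc (S : pt -> Prop) :
  open [set p : pt | exists2 e, 0 < e & forall p', close p p' e -> S p'].
Proof.
rewrite openE => p [e e0 H]; apply/nbhs_ballP; exists (e / 2); first by rewrite /= divr_gt0.
move=> q; rewrite ball_closeE => bq; exists (e / 2); first by rewrite divr_gt0.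
move=> p' cq; apply: H; have E : e / 2 + e / 2 = e by field.
by rewrite -E; apply: close_trans bq cq.
Qed.

Lemma conn_const (A : set pt) (G : pt -> Prop) : connected A ->
  (forall p, A p -> exists2 e, 0 < e & forall p', A p' -> close p p' e -> (G p' <-> G p)) ->
  forall a b, A a -> A b -> G a -> G b.
Proof.
move=> cA loc a b Aa Ab Ga.
pose C1 := [set p : pt | exists2 e, 0 < e & forall p', close p p' e -> (A p' -> G p')].
pose C2 := [set p : pt | exists2 e, 0 < e & forall p', close p p' e -> (A p' -> ~ G p')].
have E : A `&` G = A.
  apply: cA; first by exists a.
  - exists C1; first exact: open_loc.
    apply/seteqP; split => p [Ap hp]; split => //.
      have [e e0 H] := loc p Ap; exists e => // p' cp Ap'; exact/(H p' Ap' cp).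
    have [e e0 H] := hp; apply: H => //; exact: close_refl.
  - exists (~` C2); first exact/open_closedC/open_loc.
    apply/seteqP; split => p [Ap hp]; split => //.
      by move=> [e e0 H]; apply: (H p (close_refl _ e0) Ap).
    have [//|nG] := pselect (G p).
    exfalso; apply: hp; have [e e0 H] := loc p Ap; exists e => // p' cp Ap' Gp'.
    exact/nG/(H p' Ap' cp).
by move: Ab; rewrite -E => -[].
Qed.

End C.

Section Loop.
Variable R : realType.
Local Notation pt := (R * R)%type.

Definition sig (p : pt) : pt := (p.1, - p.2).

Lemma sigK p : sig (sig p) = p.
Proof. by rewrite /sig /= opprK; case: p. Qed.

Lemma sig_fix (p : pt) : p.2 = 0 -> sig p = p.
Proof. by case: p => a b /= ->; rewrite /sig oppr0. Qed.

Lemma close_sig a b e : close (sig a) (sig b) e <-> close a b e.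
Proof. by rewrite /close /= -opprD normrN. Qed.

Variables (u r : R -> pt) (tu tr : R).
Hypotheses (cu : {within I01, continuous u}) (cr : {within I01, continuous r}).
Hypotheses (u0 : (u 0).2 = 0) (r0 : (r 0).2 = 0).
Hypotheses (Itu : I01 tu) (Itr : I01 tr) (utr : u tu = r tr).

Definition fL (N i : nat) : pt :=
  let s := i%:R / N%:R in
  if (i <= N)%N then u (tu * s)
  else if (i <= 2 * N)%N then r (tr * (2 - s))
  else if (i <= 3 * N)%N then sig (r (tr * (s - 2)))
  else sig (u (tu * (4 - s))).

Lemma sN (N k : nat) : (0 < N)%N -> (k * N)%:R / N%:R = k%:R :> R.
Proof. by move=> N0; rewrite natrM mulfK // pnatr_eq0 -lt0n. Qed.

Lemma s_le (N i k : nat) : (0 < N)%N -> (i <= k * N)%N -> i%:R / N%:R <= k%:R :> R.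
Proof.
move=> N0 ik; rewrite ler_pdivrMr ?ltr0n // -natrM ler_nat //.
Qed.

Lemma s_ge (N i k : nat) : (0 < N)%N -> (k * N <= i)%N -> k%:R <= i%:R / N%:R :> R.
Proof.
move=> N0 ik; rewrite ler_pdivlMr ?ltr0n // -natrM ler_nat //.
Qed.

Lemma s_ge0 (N i : nat) : 0 <= i%:R / N%:R :> R.
Proof. by rewrite divr_ge0. Qed.

Lemma I01M (t s : R) : I01 t -> 0 <= s <= 1 -> I01 (t * s).
Proof. by rewrite /I01 /= => /andP[t0 t1] /andP[s0 s1]; apply/andP; split; nra. Qed.

Lemma B1 N i : (i <= N)%N -> fL N i = u (tu * (i%:R / N%:R)).
Proof. by rewrite /fL /= => ->. Qed.

Lemma B2 N i : (0 < N)%N -> (N <= i <= 2 * N)%N -> fL N i = r (tr * (2 - i%:R / N%:R)).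
Proof.
move=> N0 /andP[h1 h2]; rewrite /fL /=.
case: (ltngtP i N) h1 => // [_ _|-> _]; first by rewrite h2.
have NN : N%:R / N%:R = 1 :> R by rewrite divff // pnatr_eq0 -lt0n.
by rewrite NN mulr1 utr; congr r; lra.
Qed.

Lemma B3 N i : (0 < N)%N -> (2 * N <= i <= 3 * N)%N -> fL N i = sig (r (tr * (i%:R / N%:R - 2))).
Proof.
move=> N0 /andP[h1 h2]; rewrite /fL /=.
have a1 : (i <= N)%N = false by apply/negbTE; rewrite -ltnNge; lia.
rewrite a1 h2.
case: (ltngtP i (2 * N)) h1 => // -> _.
rewrite sN // subrr mulr0 sig_fix //; congr r; lra.
Qed.

Lemma B4 N i : (0 < N)%N -> (3 * N <= i)%N -> fL N i = sig (u (tu * (4 - i%:R / N%:R))).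
Proof.
move=> N0 h1; rewrite /fL /=.
have a1 : (i <= N)%N = false by apply/negbTE; rewrite -ltnNge; lia.
have a2 : (i <= 2 * N)%N = false by apply/negbTE; rewrite -ltnNge; lia.
rewrite a1 a2.
case: (ltngtP i (3 * N)) h1 => // -> _.
rewrite sN //.
have E1 : tr * (3%:R - 2) = tr by lra.
have E2 : tu * (4 - 3%:R) = tu by lra.
by rewrite E1 E2 utr.
Qed.

Lemma fL0 N : fL N 0 = u 0.
Proof. by rewrite B1 // mul0r mulr0. Qed.

Lemma fL2 N : (0 < N)%N -> fL N (2 * N) = r 0.
Proof. by move=> N0; rewrite B2 ?leqnn ?andbT ?leq_pmull // sN // subrr mulr0. Qed.

Lemma fL4 N : (0 < N)%N -> fL N (4 * N) = u 0.
Proof. by move=> N0; rewrite B4 ?leq_pmul2r // sN // subrr mulr0 sig_fix. Qed.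


Definition Lset (p : pt) := string_of u p \/ string_of r p \/
  string_of u (sig p) \/ string_of r (sig p).

Lemma s1 (N i : nat) : (0 < N)%N -> (i <= N)%N -> 0 <= (i%:R / N%:R : R) <= 1.
Proof. by move=> N0 h; rewrite s_ge0 /= -[1]/(1%:R) s_le // mul1n. Qed.

Lemma fL_up N i : (0 < N)%N -> (i <= 2 * N)%N -> string_of u (fL N i) \/ string_of r (fL N i).
Proof.
move=> N0 h.
have [iN|Ni] := leqP i N.
  left; rewrite B1 //; exists (tu * (i%:R / N%:R)) => //; exact: I01M (s1 N0 iN).
right; rewrite B2 ?h ?(ltnW Ni) //; exists (tr * (2 - i%:R / N%:R)) => //; apply: I01M => //.
have a : i%:R / N%:R <= 2%:R :> R by rewrite s_le.
have b : 1%:R <= i%:R / N%:R :> R by rewrite s_ge // mul1n ltnW.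
apply/andP; split; lra.
Qed.


Lemma fL_down N i : (0 < N)%N -> (2 * N <= i <= 4 * N)%N ->
  string_of u (sig (fL N i)) \/ string_of r (sig (fL N i)).
Proof.
move=> N0 /andP[h1 h2].
have [iN|Ni] := leqP i (3 * N).
  right; rewrite B3 ?h1 ?iN // sigK; exists (tr * (i%:R / N%:R - 2)) => //; apply: I01M => //.
  have a : i%:R / N%:R <= 3%:R :> R by rewrite s_le.
  have b : 2%:R <= i%:R / N%:R :> R by rewrite s_ge.
  apply/andP; split; lra.
left; rewrite B4 ?(ltnW Ni) // sigK; exists (tu * (4 - i%:R / N%:R)) => //; apply: I01M => //.
have a : i%:R / N%:R <= 4%:R :> R by rewrite s_le.
have b : 3%:R <= i%:R / N%:R :> R by rewrite s_ge // ltnW.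
apply/andP; split; lra.
Qed.

Lemma fL_mem N i : (0 < N)%N -> (i <= 4 * N)%N -> Lset (fL N i).
Proof.
move=> N0 h; have [i2|i2] := leqP i (2 * N).
  by case: (fL_up N0 i2) => H; [left|right; left].
by case: (fL_down N0 (i := i)) => [|H|H]; [rewrite h ltnW| right; right; left| right; right; right].
Qed.

Lemma pd (t x y d : R) : 0 <= t <= 1 -> `|x - y| <= d -> `|t * x - t * y| <= d.
Proof.
move=> /andP[t0 t1] h; rewrite -mulrBr normrM ger0_norm //.
have d0 : 0 <= d by apply: le_trans h.
by apply: le_trans (ler_piMl _ _) _; rewrite ?normr_ge0.
Qed.

Lemma sS (N i : nat) : (i.+1)%:R / N%:R = i%:R / N%:R + N%:R^-1 :> R.
Proof. by rewrite -addn1 natrD mulrDl mul1r. Qed.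


Lemma fL_close e : 0 < e -> exists N0, (0 < N0)%N /\ forall N, (N0 <= N)%N ->
  forall i, (i < 4 * N)%N -> close (fL N i) (fL N i.+1) e.
Proof.
move=> e0; have [Nu Hu] := unif cu e0; have [Nr Hr] := unif cr e0.
exists (maxn 1 (maxn Nu Nr)); split; first by rewrite leq_max.
move=> N; rewrite !geq_max => /andP[N0 /andP[NNu NNr]] i i4.
have Ni0 : 0 <= N%:R^-1 :> R by rewrite invr_ge0.
have step : forall a b : R, b = a + N%:R^-1 \/ b = a - N%:R^-1 -> `|a - b| <= N%:R^-1.
  by move=> a b [->|->]; rewrite ler_norml; apply/andP; split; lra.
have Itu' : 0 <= tu <= 1 by [].
have Itr' : 0 <= tr <= 1 by [].
have [iN|Ni] := ltnP i N.
  rewrite (B1 (ltnW iN)) (B1 iN).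
  apply: (Hu N NNu).
  - exact: I01M Itu (s1 N0 (ltnW iN)).
  - exact: I01M Itu (s1 N0 iN).
  by apply: pd Itu' _; apply: step; left; rewrite sS.
have [iN2|Ni2] := ltnP i (2 * N).
  have h1 : (N <= i <= 2 * N)%N by rewrite Ni ltnW.
  have h2 : (N <= i.+1 <= 2 * N)%N by rewrite iN2 leqW.
  rewrite (B2 N0 h1) (B2 N0 h2).
  have a : i%:R / N%:R <= 2%:R :> R by rewrite s_le // ltnW.
  have b : 1%:R <= i%:R / N%:R :> R by rewrite s_ge // mul1n.
  have a' : i.+1%:R / N%:R <= 2%:R :> R by rewrite s_le.
  have b' : 1%:R <= i.+1%:R / N%:R :> R by rewrite s_ge // mul1n ltnW.
  apply: (Hr N NNr).
  - by apply: I01M Itr _; apply/andP; split; lra.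
  - by apply: I01M Itr _; apply/andP; split; lra.
  by apply: pd Itr' _; apply: step; right; rewrite sS; lra.
have [iN3|Ni3] := ltnP i (3 * N).
  have h1 : (2 * N <= i <= 3 * N)%N by rewrite Ni2 ltnW.
  have h2 : (2 * N <= i.+1 <= 3 * N)%N by rewrite iN3 leqW.
  rewrite (B3 N0 h1) (B3 N0 h2); apply/close_sig.
  have a : i%:R / N%:R <= 3%:R :> R by rewrite s_le // ltnW.
  have b : 2%:R <= i%:R / N%:R :> R by rewrite s_ge.
  have a' : i.+1%:R / N%:R <= 3%:R :> R by rewrite s_le.
  have b' : 2%:R <= i.+1%:R / N%:R :> R by rewrite s_ge // ltnW.
  apply: (Hr N NNr).
  - by apply: I01M Itr _; apply/andP; split; lra.
  - by apply: I01M Itr _; apply/andP; split; lra.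
  by apply: pd Itr' _; apply: step; left; rewrite sS; lra.
rewrite (B4 N0 Ni3) (B4 N0 (leqW Ni3)); apply/close_sig.
have a : i%:R / N%:R <= 4%:R :> R by rewrite s_le // ltnW.
have b : 3%:R <= i%:R / N%:R :> R by rewrite s_ge.
have a' : i.+1%:R / N%:R <= 4%:R :> R by rewrite s_le.
have b' : 3%:R <= i.+1%:R / N%:R :> R by rewrite s_ge // ltnW.
apply: (Hu N NNu).
- by apply: I01M Itu _; apply/andP; split; lra.
- by apply: I01M Itu _; apply/andP; split; lra.
by apply: pd Itu' _; apply: step; right; rewrite sS; lra.
Qed.

End Loop.

Section Core.
Variable R : realType.
Local Notation pt := (R * R)%type.
Variables (u r X : R -> pt) (tu tr : R).
Hypotheses (cu : {within I01, continuous u}) (cr : {within I01, continuous r}).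
Hypotheses (cX : {within I01, continuous X}).
Hypotheses (u0 : (u 0).2 = 0) (r0 : (r 0).2 = 0) (X0 : (X 0).2 = 0).
Hypotheses (uup : forall t, I01 t -> 0 <= (u t).2) (rup : forall t, I01 t -> 0 <= (r t).2).
Hypotheses (Xup : forall t, I01 t -> 0 <= (X t).2).
Hypotheses (Itu : I01 tu) (Itr : I01 tr) (utr : u tu = r tr).
Hypotheses (dXu : forall p, string_of X p -> ~ string_of u p).
Hypotheses (dXr : forall p, string_of X p -> ~ string_of r p).
Hypotheses (bux : (u 0).1 < (X 0).1) (bxr : (X 0).1 < (r 0).1).

Local Notation f := (fL u r tu tr).
Local Notation Ls := (Lset u r).

Definition Good (p : pt) := exists N0, forall N, (N0 <= N)%N -> Wsum (f N) p 0 (4 * N) = -4.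

Lemma str_up (g : R -> pt) y : (forall t, I01 t -> 0 <= (g t).2) -> string_of g y -> 0 <= y.2.
Proof. by move=> h [t It <-]; apply: h. Qed.

Lemma upper_L (p : pt) : 0 <= p.2 -> Ls p -> string_of u p \/ string_of r p.
Proof.
move=> p0 [h|[h|[h|h]]]; [by left|by right| |].
  left; case: h => t It E; exists t => //.
  have h := uup It; rewrite E /= in h.
  have p2 : p.2 = 0 by lra.
  by rewrite E sig_fix.
right; case: h => t It E; exists t => //.
have h := rup It; rewrite E /= in h.
have p2 : p.2 = 0 by lra.
by rewrite E sig_fix.
Qed.

Lemma close_mono (a b : pt) (e e' : R) : close a b e -> e <= e' -> close a b e'.
Proof. by move=> [h1 h2] ee; split; apply: lt_le_trans ee. Qed.

Lemma dist (p : pt) : ~ Ls p -> exists2 m, 0 < m & forall y, Ls y -> ~ close y p (m + m).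
Proof.
move=> nL.
have [e1 e10 H1] := avoid cu (fun h => nL (or_introl h)).
have [e2 e20 H2] := avoid cr (fun h => nL (or_intror (or_introl h))).
have [e3 e30 H3] := avoid (p := sig p) cu (fun h => nL (or_intror (or_intror (or_introl h)))).
have [e4 e40 H4] := avoid (p := sig p) cr (fun h => nL (or_intror (or_intror (or_intror h)))).
pose m := Num.min (Num.min e1 e2) (Num.min e3 e4) / 2.
have mm : m + m = Num.min (Num.min e1 e2) (Num.min e3 e4) by rewrite /m; field.
have m0 : 0 < m by rewrite /m divr_gt0 // !lt_min e10 e20 e30 e40.
exists m => // y [[t It <-]|[[t It <-]|[[t It E]|[t It E]]]] c.
- by apply: (H1 t It); apply: close_mono c _; rewrite mm !ge_min lexx.
- by apply: (H2 t It); apply: close_mono c _; rewrite mm !ge_min lexx orbT.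
- apply: (H3 t It); rewrite E; apply/close_sig; apply: close_mono c _.
  by rewrite mm !ge_min lexx orbT.
- apply: (H4 t It); rewrite E; apply/close_sig; apply: close_mono c _.
  by rewrite mm !ge_min lexx !orbT.
Qed.

Lemma bigv_of (y p : pt) (m : R) : ~ close y p m -> bigv (sub y p) m.
Proof.
move=> nc; rewrite /bigv /=.
case: (lerP m `|y.1 - p.1|) => h1; first by left.
case: (lerP m `|y.2 - p.2|) => h2; first by right.
by exfalso; apply: nc.
Qed.

Lemma not_close_shift (y p p' : pt) (m : R) : 0 < m -> ~ close y p (m + m) -> close p p' (m / 4) -> ~ close y p' m.
Proof.
move=> m0 nc cp cy; apply: nc; apply: close_mono (close_trans cy (close_sym cp)) _.
lra.
Qed.


Lemma fcl e : 0 < e -> exists N0, (0 < N0)%N /\ forall N, (N0 <= N)%N ->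
  forall i, (i < 4 * N)%N -> close (f N i) (f N i.+1) e.
Proof. by move=> e0; apply: fL_close. Qed.

Lemma fmem N i : (0 < N)%N -> (i <= 4 * N)%N -> Ls (f N i).
Proof. by move=> *; apply: fL_mem. Qed.

Lemma f4 N : (0 < N)%N -> f N (4 * N) = u 0.
Proof. by move=> *; apply: fL4. Qed.

Lemma f2 N : (0 < N)%N -> f N (2 * N) = r 0.
Proof. by move=> *; apply: fL2. Qed.

Lemma fup N i : (0 < N)%N -> (i <= 2 * N)%N -> string_of u (f N i) \/ string_of r (f N i).
Proof. by move=> *; apply: fL_up. Qed.

Lemma fdown N i : (0 < N)%N -> (2 * N <= i <= 4 * N)%N ->
  string_of u (sig (f N i)) \/ string_of r (sig (f N i)).
Proof. by move=> *; apply: fL_down. Qed.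

Lemma NO (p : pt) : ~ Ls p -> exists2 m, 0 < m & exists N1, (0 < N1)%N /\ forall N, (N1 <= N)%N ->
  (forall i, (i <= 4 * N)%N -> bigv (sub (f N i) p) m) /\
  (forall i, (i < 4 * N)%N -> ~~ opp4 (quad (sub (f N i) p)) (quad (sub (f N i.+1) p))).
Proof.
move=> nL; have [m m0 Hm] := dist nL.
have m4 : 0 < m / 4 by rewrite divr_gt0.
have [N1 [N1p HN1]] := fcl m4.
exists m => //; exists N1; split => // N NN.
have Np : (0 < N)%N by apply: leq_trans NN.
have hb : forall i, (i <= 4 * N)%N -> bigv (sub (f N i) p) m.
  move=> i hi; apply: bigv_of => c; apply: (Hm _ (fmem Np hi)).
  by apply: close_mono c _; lra.
split => // i hi; apply: nopp_sub m0 (hb _ (ltnW hi)) (hb _ hi) (HN1 N NN i hi) (close_refl _ m4).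
Qed.

Lemma LC (p : pt) : ~ Ls p -> exists2 e, 0 < e & forall p', close p p' e -> (Good p' <-> Good p).
Proof.
move=> nL; have [m m0 Hm] := dist nL.
have m4 : 0 < m / 4 by rewrite divr_gt0.
have [N1 [N1p HN1]] := fcl m4.
exists (m / 4) => // p' cp.
have Weq : forall N, (N1 <= N)%N -> Wsum (f N) p 0 (4 * N) = Wsum (f N) p' 0 (4 * N).
  move=> N NN; have Np : (0 < N)%N by apply: leq_trans NN.
  apply: (W_const m0) => //.
  - by rewrite (f4 Np) fL0.
  - move=> i hi; have L := fmem Np hi; split.
      by apply: bigv_of => c; apply: (Hm _ L); apply: close_mono c _; lra.
    by apply: bigv_of; apply: not_close_shift m0 (Hm _ L) cp.
  - by move=> i hi; apply: HN1.
split => -[N0 H]; exists (maxn N0 N1) => N; rewrite geq_max => /andP[h1 h2].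
  by rewrite Weq // H.
by rewrite -Weq // H.
Qed.

Lemma Lbound : exists M, forall y, Ls y -> `|y.1| <= M /\ `|y.2| <= M.
Proof.
have [Mu Hu] := str_bounded cu; have [Mr Hr] := str_bounded cr.
exists (Num.max Mu Mr) => y [[t It <-]|[[t It <-]|[[t It E]|[t It E]]]].
- by have [a b] := Hu t It; rewrite !le_max a b.
- by have [a b] := Hr t It; rewrite !le_max a b !orbT.
- have [a b] := Hu t It; move: a b; rewrite E /= normrN => a b.
  by rewrite !le_max a b.
- have [a b] := Hr t It; move: a b; rewrite E /= normrN => a b.
  by rewrite !le_max a b !orbT.
Qed.


Lemma I010 : I01 (0 : R).
Proof. by rewrite /I01 /= lexx ler01. Qed.

Lemma good_c : Good (X 0).
Proof.
have nL : ~ Ls (X 0).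
  move=> L; have Xs : string_of X (X 0) by exists 0 => //; exact: I010.
  have X0' : 0 <= (X 0).2 by rewrite X0.
  by case: (upper_L X0' L) => h; [exact: dXu Xs h | exact: dXr Xs h].
have [m m0 [N1 [N1p HN1]]] := NO nL.
exists N1 => N NN; have Np : (0 < N)%N := leq_trans N1p NN.
have [hb ho] := HN1 N NN.
have s24 : (0 <= 2 * N <= 4 * N)%N by rewrite leq_pmul2r.
rewrite (Wsum_split (f N) (X 0) s24).
rewrite (@W_teleU _ (f N) (X 0) 0 (2 * N)) //; first last.
- by move=> i /andP[_ hi]; apply: ho; apply: leq_trans hi _; rewrite leq_pmul2r.
- move=> i /andP[_ hi]; apply: quad_up m0 (hb i _) _.
    by apply: leq_trans hi _; rewrite leq_pmul2r.
  rewrite /= X0 subr0.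
  by case: (fup Np hi) => h; [apply: str_up uup h | apply: str_up rup h].
rewrite (@W_teleL _ (f N) (X 0) (2 * N) (4 * N)) //; first last.
- by move=> i /andP[_ hi]; apply: ho.
- move=> i hi; apply: quad_down.
  rewrite /= X0 subr0.
  have : 0 <= (sig (f N i)).2.
    by case: (fdown Np hi) => h; [apply: str_up uup h | apply: str_up rup h].
  by rewrite /= oppr_ge0.
rewrite (f2 Np) (f4 Np) fL0.
rewrite (@quad_posx _ (sub (r 0) (X 0))); last by rewrite /= r0 X0 subrr.
  rewrite (@quad_negx _ (sub (u 0) (X 0))); last by rewrite /= u0 X0 subrr.
    by [].
  by rewrite /= subr_lt0.
by rewrite /= subr_gt0.
Qed.

Lemma bad_q (q : pt) : ~ Ls q -> (exists M, (forall y, Ls y -> `|y.1| <= M /\ `|y.2| <= M) /\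
  (M < q.1 \/ q.1 < - M \/ M < q.2 \/ q.2 < - M)) -> ~ Good q.
Proof.
move=> nL [M [HM hq]] [N0 HG].
have [m m0 [N1 [N1p HN1]]] := NO nL.
pose N := maxn N0 N1.
have NN : (N1 <= N)%N by rewrite leq_maxr.
have Np : (0 < N)%N := leq_trans N1p NN.
have [hb ho] := HN1 N NN.
have := HG N (leq_maxl _ _).
have B : forall i, (i <= 4 * N)%N -> `|(f N i).1| <= M /\ `|(f N i).2| <= M.
  by move=> i hi; apply: HM; apply: fmem.
have ho' : forall i, (0 <= i < 4 * N)%N -> ~~ opp4 (quad (sub (f N i) q)) (quad (sub (f N i.+1) q)).
  by move=> i /andP[_ hi]; apply: ho.
have s0 : (0 <= 4 * N)%N by [].
case: hq => [h|[h|[h|h]]].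
- rewrite (@W_teleU _ (f N) q 0 (4 * N)) //; first by rewrite (f4 Np) fL0 subrr.
  move=> i /andP[_ hi]; apply: quad_left => /=; have [b1 _] := B i hi.
  move: b1; rewrite ler_norml => /andP[? ?]; lra.
- rewrite (@W_teleL _ (f N) q 0 (4 * N)) //; first by rewrite (f4 Np) fL0 subrr.
  move=> i /andP[_ hi]; apply: quad_right => /=; have [b1 _] := B i hi.
  move: b1; rewrite ler_norml => /andP[? ?]; lra.
- rewrite (@W_teleL _ (f N) q 0 (4 * N)) //; first by rewrite (f4 Np) fL0 subrr.
  move=> i /andP[_ hi]; apply: quad_neg => /=; have [_ b1] := B i hi.
  move: b1; rewrite ler_norml => /andP[? ?]; lra.
- rewrite (@W_teleU _ (f N) q 0 (4 * N)) //; first by rewrite (f4 Np) fL0 subrr.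
  move=> i /andP[_ hi]; apply: quad_pos => /=; have [_ b1] := B i hi.
  move: b1; rewrite ler_norml => /andP[? ?]; lra.
Qed.


Lemma core (C : set pt) (w : pt) : connected C ->
  (forall p, C p -> 0 <= p.2 /\ ~ string_of u p /\ ~ string_of r p) ->
  ~ bounded_pts C -> string_of X w -> closure C w -> False.
Proof.
move=> cC HC nbC sw cw.
have gc := good_c.
have nLX : forall p, string_of X p -> ~ Ls p.
  move=> p sp L; have p0 : 0 <= p.2 by apply: str_up Xup sp.
  by case: (upper_L p0 L) => h; [exact: dXu sp h | exact: dXr sp h].
have nLC : forall p, C p -> ~ Ls p.
  move=> p Cp L; have [p0 [h1 h2]] := HC p Cp.
  by case: (upper_L p0 L).
have cI : connected (@I01 R).
  by have := @segment_connected R 0 1; rewrite set_itvcc.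
have cXs : connected (string_of X) := connected_continuous_connected cI cX.
have sX0 : string_of X (X 0) by exists 0 => //; exact: I010.
have Gw : Good w.
  apply: (conn_const cXs _ sX0 sw gc) => p sp.
  have [e e0 He] := LC (nLX p sp); exists e => // p' _; exact: He.
have [e e0 He] := LC (nLX w sw).
have [p0 [Cp0 bp0]] := cw (ball w e) (nbhsx_ballx _ _ e0).
have Gp0 : Good p0 by apply/(He p0 _).2 => //; rewrite -ball_closeE.
have [M HM] := Lbound.
have [q [Cq nq]] : exists q, C q /\ ~ (`|q.1| <= M /\ `|q.2| <= M).
  apply: contrapT => H; apply: nbC; exists M => p Cp.
  have [//|np] := pselect (`|p.1| <= M /\ `|p.2| <= M).
  by exfalso; apply: H; exists p.
have Gq : Good q.
  apply: (conn_const cC _ Cp0 Cq Gp0) => p Cp.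
  have [e' e0' He'] := LC (nLC p Cp); exists e' => // p' _; exact: He'.
apply: (bad_q (nLC q Cq) _ Gq); exists M; split => //.
case: (lerP `|q.1| M) => h1.
  case: (lerP `|q.2| M) => h2; first by exfalso; apply: nq.
  move: h2; rewrite ltr_normr => /orP[h|h]; right; right; [left|right] => //; lra.
move: h1; rewrite ltr_normr => /orP[h|h]; [left|right; left] => //; lra.
Qed.

End Core.

Theorem lemma4 (R : realType) (V : finType) (e : rel V) (phi : V -> R -> R * R) :
  (forall u v, e u v = e v u) -> irreflexive e ->
  outer_string_rep e phi ->
  forall x r : V,
    external phi x ->
    string_of (phi r) `&` string_of (phi x) = set0 ->
    (base phi x).1 < (base phi r).1 ->
  forall u : V, e r u -> (base phi u).1 < (base phi x).1 ->
    (u == x) || e x u.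
Proof.
move=> esym eirr [Hstr Hadj] x r ext Hrx bxr u eru bux.
case: (boolP ((u == x) || e x u)) => // /norP[ux nexu]; exfalso.
have xu : x != u by rewrite eq_sym.
have Hxu : ~ (string_of (phi x) `&` string_of (phi u) !=set0).
  by move=> h; move/negP: nexu; apply; apply/(Hadj x u xu).
have ru : r != u by apply/eqP => E; move: eru; rewrite E eirr.
have [z [[tr Itr zr] [tu Itu zu]]] := (Hadj r u ru).1 eru.
have [cu [u0 uax]] := Hstr u; have [cr [r0 rax]] := Hstr r; have [cX [X0 Xax]] := Hstr x.
have uup : forall t, I01 t -> 0 <= (phi u t).2 by move=> t /uax [].
have rup : forall t, I01 t -> 0 <= (phi r t).2 by move=> t /rax [].
have Xup : forall t, I01 t -> 0 <= (phi x t).2 by move=> t /Xax [].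
have Itu' : I01 tu by [].
have Itr' : I01 tr by [].
have utr : phi u tu = phi r tr by rewrite zu zr.
have dXu : forall p, string_of (phi x) p -> ~ string_of (phi u) p.
  by move=> p h1 h2; apply: Hxu; exists p.
have dXr : forall p, string_of (phi x) p -> ~ string_of (phi r) p.
  by move=> p h1 h2; have : (string_of (phi r) `&` string_of (phi x)) p by []; rewrite Hrx.
have bux' : (phi u 0).1 < (phi x 0).1 by [].
have bxr' : (phi x 0).1 < (phi r 0).1 by [].
case: ext => C [[p0 [Hp0 EC]] [nbC [w [sw [cw _]]]]].
have cC : connected C by rewrite EC; exact: component_connected.
have HC : forall p, C p -> 0 <= p.2 /\ ~ string_of (phi u) p /\ ~ string_of (phi r) p.
  move=> p; rewrite EC => /connected_component_sub [up nall]; split => //.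
  by split => h; apply: nall; [exists u | exists r].
by eapply (@core R (phi u) (phi r) (phi x) tu tr); eassumption.
Qed.
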